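(* Let $(X,d)$ be a separable metric space, $T\colon X\to X$ a Borel measurable map and $\mu$ a $T$-invariant Borel probability measure on $X$. Let $(s_n)_{n\ge1}$ be a scale sequence which is either monotone or steady. Then the proximality gauge $\psi(x,y)=\liminf_{n\to\infty} s_n\, d(T^nx,T^ny)$ satisfies $\psi(Tx,Ty)=\psi(x,y)$ for $\mu\times\mu$-almost every $(x,y)\in X^2$.
   Context: A scale sequence is a sequence $(s_n)_{n\ge1}$ of positive reals with $s_n\to\infty$. It is monotone if $s_{n+1}\ge s_n$ for all sufficiently large $n$, and steady if $\lim_{n\to\infty}s_{n+1}/s_n=1$. *)

(* Defs.v *)
From HB Require Import structures.
From mathcomp Require Import all_boot all_order all_algebra.
From mathcomp Require Import all_classical all_reals all_analysis.
Set Implicit Arguments. Unset Strict Implicit. Unset Printing Implicit Defensive.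
Import Order.TTheory GRing.Theory Num.Theory numFieldNormedType.Exports.
Local Open Scope classical_set_scope.
Local Open Scope ring_scope.

(* Pointed metric spaces (join of the library's metricType with pointedType);
   the point is harmless: a space carrying a probability measure is nonempty,
   and MathComp-Analysis' measurable types are required to be pointed. *)
#[short(type="pmetricType")]
HB.structure Definition PointedMetric (K : numDomainType) :=
  { M of Pointed M & Metric K M }.

Definition borel (X : ptopologicalType) := g_sigma_algebraType (@open X).

Definition separable (X : topologicalType) : Prop :=
  exists D : set X, countable D /\ dense D.

Definition scale_sequence (R : realType) (s : nat -> R) : Prop :=
  (forall n, (1 <= n)%N -> 0 < s n) /\ s @ \oo --> +oo.

Definition monotone_seq (R : realType) (s : nat -> R) : Prop :=
  exists N, forall n, (N <= n)%N -> s n <= s n.+1.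

Definition steady_seq (R : realType) (s : nat -> R) : Prop :=
  (fun n => s n.+1 / s n) @ \oo --> (1:R)%R.

Definition prox_gauge (R : realType) (X : metricType R) (T : X -> X)
  (s : nat -> R) (x y : X) : \bar R :=
  limn_einf (fun n => (s n * mdist (iter n T x) (iter n T y))%:E).

(* Main.v *)
Require Import Defs.
From HB Require Import structures.
From mathcomp Require Import all_boot all_order all_algebra.
From mathcomp Require Import all_classical all_reals all_analysis.
From mathcomp Require Import measurable_realfun.
From mathcomp Require Import zify.
From mathcomp.algebra_tactics Require Import ring lra.
Import Order.TTheory GRing.Theory Num.Theory numFieldNormedType.Exports.
Local Open Scope classical_set_scope.
Local Open Scope ring_scope.
Section liminf.
Context {R : realType}.
Local Open Scope ereal_scope.
Implicit Types (u v : (\bar R)^nat).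

Lemma einfs_le_liminf u n : einfs u n <= limn_einf u.
Proof.
rewrite limn_einf_lim (_ : limn _ = ereal_sup (range (einfs u))); last first.
  by apply/cvg_lim => //; exact: cvg_einfs_sup.
by apply: ereal_sup_ubound; exists n.
Qed.

Lemma liminf_le_ub u z : (forall n, einfs u n <= z) -> limn_einf u <= z.
Proof.
move=> h; rewrite limn_einf_lim (_ : limn _ = ereal_sup (range (einfs u))); last first.
  by apply/cvg_lim => //; exact: cvg_einfs_sup.
by apply: ub_ereal_sup => _ [n _ <-]; exact: h.
Qed.

Lemma liminf_le_scale u v (k : R) N i j : (0 < k)%R ->
  (forall n, (N <= n)%N -> u (n + j)%N <= k%:E * v (n + i)%N) ->
  limn_einf u <= k%:E * limn_einf v.
Proof.
move=> k0 h; apply: liminf_le_ub => n.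
apply: (le_trans (nondecreasing_einfs u (leq_addr (N + j)%N n))).
have : einfs u (n + (N + j))%N <= k%:E * einfs v (n + (N + i))%N.
  rewrite -lee_pdivrMl//; apply: le_ereal_inf_tmp => _ [m /= hm <-].
  rewrite lee_pdivrMl//.
  have hmi : (i <= m)%N by lia.
  have -> : m = ((m - i) + i)%N by rewrite subnK.
  apply: le_trans (h _ _); last first.
    lia.
  apply: ereal_inf_lbound; exists (m - i + j)%N => //=.
  lia.
move/le_trans; apply.
by rewrite lee_pmul2l//; exact: einfs_le_liminf.
Qed.

End liminf.
Lemma le_of_scale {R : realType} (x y : \bar R) :
  (forall k : R, 1 < k -> (x <= k%:E * y)%E) -> (x <= y)%E.
Proof.
move=> h; case: y h => [r| |] h; last 2 first.
- by rewrite leey.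
- have := h 2 (ltr1n _ 2); rewrite mulrNy gtr0_sg// mul1e.
  by move=> ->.
case: x h => [a| |] h; last 2 first.
- by have := h 2 (ltr1n _ 2); rewrite -EFinM.
- by rewrite leNye.
rewrite lee_fin; have [r0|r0] := ltP r 0.
  have := h 2 (ltr1n _ 2); rewrite -EFinM lee_fin => ha; nra.
apply/ler_addgt0Pr => e e0.
have r1 : 0 < r + 1 by lra.
have hk : 1 < 1 + e / (r + 1) by rewrite ltrDl divr_gt0.
have := h _ hk; rewrite -EFinM lee_fin => /le_trans; apply.
rewrite mulrDl mul1r lerD2l mulrAC ler_pdivrMr//; nra.
Qed.
Lemma gauge_shift_le {R : realType} (s a : nat -> R) (k : R) N : 0 < k ->
  (forall n, (N <= n)%N -> s n <= k * s n.+1) -> (forall n, 0 <= a n) ->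
  (limn_einf (fun n => (s n * a n.+1)%:E) <=
   k%:E * limn_einf (fun n => (s n * a n)%:E))%E.
Proof.
move=> k0 hs ha; apply: (@liminf_le_scale _ _ _ k N 1 0) => // n hn.
rewrite addn0 addn1 -EFinM lee_fin mulrA ler_wpM2r//; exact: hs.
Qed.

Lemma gauge_shift_ge {R : realType} (s a : nat -> R) (k : R) N : 0 < k ->
  (forall n, (N <= n)%N -> s n.+1 <= k * s n) -> (forall n, 0 <= a n) ->
  (limn_einf (fun n => (s n * a n)%:E) <=
   k%:E * limn_einf (fun n => (s n * a n.+1)%:E))%E.
Proof.
move=> k0 hs ha; apply: (@liminf_le_scale _ _ _ k N 0 1) => // n hn.
rewrite addn0 addn1 -EFinM lee_fin mulrA ler_wpM2r//; exact: hs.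
Qed.

Lemma steady_bounds {R : realType} (s : nat -> R) (k : R) :
  (forall n, (1 <= n)%N -> 0 < s n) -> steady_seq s -> 1 < k ->
  exists N, forall n, (N <= n)%N -> s n <= k * s n.+1 /\ s n.+1 <= k * s n.
Proof.
move=> spos hst k1.
have e0 : 0 < (k - 1) / k by rewrite divr_gt0 ?subr_gt0//; lra.
have [N _ hN] := cvgr_dist_lt _ _ hst _ e0.
exists (maxn N 1) => n hn.
have sn : 0 < s n by apply: spos; lia.
have /hN : (N <= n)%N by lia.
rewrite /= => hr.
have hk0 : 0 < k by lra.
move: hr; rewrite ltr_distl => /andP[hr1 hr2].
set e := (k - 1) / k in hr1 hr2 e0.
set r := s n.+1 / s n in hr1 hr2.
have he : e * k = k - 1 by rewrite /e mulfVK// gt_eqF.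
have hr : r * s n = s n.+1 by rewrite /r mulfVK// gt_eqF.
have kr : 1 <= k * r by nra.
have rk : r <= k by nra.
by split; nra.
Qed.
Section gauge.
Context {R : realType} (X : metricType R) (T : X -> X) (s : nat -> R).

Let a x y n := mdist (iter n T x) (iter n T y).

Let a_ge0 x y n : 0 <= a x y n. Proof. exact: mdist_ge0. Qed.

Let prox_shift x y : prox_gauge T s (T x) (T y) =
  limn_einf (fun n => (s n * a x y n.+1)%:E).
Proof. by rewrite /prox_gauge /a; congr limn_einf; apply/funext => n; rewrite !iterSr. Qed.

Lemma prox_mono_le : monotone_seq s ->
  forall x y, (prox_gauge T s (T x) (T y) <= prox_gauge T s x y)%E.
Proof.
move=> [N hN] x y; rewrite prox_shift.
have := @gauge_shift_le _ s (a x y) 1 N ltr01.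
rewrite mul1e; apply => // n /hN; by rewrite mul1r.
Qed.

Lemma prox_steady_eq : (forall n, (1 <= n)%N -> 0 < s n) -> steady_seq s ->
  forall x y, prox_gauge T s (T x) (T y) = prox_gauge T s x y.
Proof.
move=> spos hst x y; rewrite prox_shift; apply/eqP; rewrite eq_le.
apply/andP; split; apply: le_of_scale => k k1;
  have [N hN] := steady_bounds s k spos hst k1.
- by apply: (@gauge_shift_le _ s (a x y) k N) => [|n /hN[]//|//]; lra.
- by apply: (@gauge_shift_ge _ s (a x y) k N) => [|n /hN[]//|//]; lra.
Qed.

End gauge.
Lemma ereal_rat_between {R : realType} (a b : \bar R) : (a < b)%E ->
  exists q : rat, (a < (ratr q)%:E < b)%E.
Proof.
move=> ab.
have [x [y [xy ax yb]]] : exists x y : R, [/\ x < y, (a <= x%:E)%E & (y%:E <= b)%E].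
  move: a b ab => [a| |] [b| |] //= ab.
  - by exists a, b; rewrite !lexx; split => //; rewrite -lte_fin.
  - by exists a, (a + 1); rewrite lexx leey ltrDl; split.
  - by exists (b - 1), b; rewrite lexx leNye ltrBlDr ltrDl; split.
  - by exists 0, 1; rewrite leNye leey; split.
have [q] := rat_in_itvoo xy; rewrite in_itv /= => /andP[xq qy].
exists q; apply/andP; split.
- by apply: le_lt_trans ax _; rewrite lte_fin.
- by apply: lt_le_trans yb; rewrite lte_fin.
Qed.

Lemma invariance_ae d (O : measurableType d) (R : realType)
  (P : {measure set O -> \bar R}) (S : O -> O) (f : O -> \bar R) :
  (P setT < +oo)%E -> measurable_fun setT S ->
  (forall A, measurable A -> P (S @^-1` A) = P A) ->
  measurable_fun setT f -> (forall z, (f (S z) <= f z)%E) ->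
  {ae P, forall z, f (S z) = f z}.
Proof.
move=> PT mS hP mf hle.
pose A (q : rat) := [set z | (f z < (ratr q)%:E)%E].
have mA q : measurable (A q).
  by rewrite -(setTI (A q)); exact: emeasurable_fun_infty_o.
have AS q : A q `<=` S @^-1` A q.
  by move=> z; rewrite /A /= => fz; exact: le_lt_trans (hle z) fz.
pose F q := S @^-1` A q `\` A q.
have Fneg q : P.-negligible (F q).
  have mSA : measurable (S @^-1` A q) by rewrite -(setTI (_ @^-1` _)); exact: mS.
  exists (F q); split => //; first exact: measurableD.
  rewrite /F measureD//; last first.
    by rewrite (le_lt_trans _ PT)// le_measure// inE.
  rewrite (_ : _ `&` _ = A q); last first.
    by apply/seteqP; split => z /=; [case|move=> Az; split => //; exact: AS].
  transitivity (P (A q) - P (A q))%E; first by congr (_ - _)%E; exact: hP.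
  rewrite subee// ge0_fin_numE//.
  by rewrite (le_lt_trans _ PT)// le_measure// inE.
pose G n := if unpickle n is Some q then F q else set0.
have : P.-negligible (\bigcup_n G n).
  apply: negligible_bigcup => n; rewrite /G; case: unpickle => //.
  exact: negligible_set0.
apply: negligibleS => z /= hz.
have lt : (f (S z) < f z)%E by rewrite lt_neqAle hle andbT; apply/eqP.
have [q /andP[q1 q2]] := ereal_rat_between _ _ lt.
exists (pickle q); first by [].
rewrite /G pickleK; split.
  exact: q1.
by rewrite /A /= ltNge (ltW q2).
Qed.
Lemma prod_invariant d (Y : measurableType d) (R : realType)
  (mu : probability Y R) (T : Y -> Y) (mT : measurable_fun setT T)
  (hinv : forall A, measurable A -> mu (T @^-1` A) = mu A) :
  forall A : set (Y * Y), measurable A ->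
  (mu \x mu)%E ((fun z => (T z.1, T z.2)) @^-1` A) = (mu \x mu)%E A.
Proof.
pose S := fun z : Y * Y => (T z.1, T z.2).
have mS : measurable_fun setT S.
  by apply: measurable_fun_pair; apply: measurableT_comp => //.
have mTA A : measurable A -> measurable (T @^-1` A).
  by move=> mA; rewrite -(setTI (T @^-1` A)); exact: mT.
have hrect A B : measurable A -> measurable B ->
    pushforward (mu \x mu)%E S (A `*` B) = (mu A * mu B)%E.
  move=> mA mB; rewrite /pushforward.
  have -> : S @^-1` (A `*` B) = T @^-1` A `*` T @^-1` B by apply/seteqP; split.
  rewrite product_measure1E; [|exact: mTA..].
  by congr (_ * _)%E; apply: hinv.
move=> A mA.
have := @product_measure_unique _ _ _ _ _ mu mu (pushforward (mu \x mu)%E S) hrect A mA.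
by move=> ->.
Qed.
Section metric_meas.
Context {R : realType} (X : pmetricType R).

Lemma open_mball (q : X) (r : R) : open [set y | mdist q y < r].
Proof.
rewrite openE => y /= hy; rewrite /interior; apply/nbhs_ballP.
exists (r - mdist q y); first by rewrite /= subr_gt0.
move=> z; rewrite ballEmdist /= => hz.
by apply: le_lt_trans (metric_triangle q y z) _; rewrite -ltrBrDl.
Qed.

Lemma mdist_measurable (q : X) :
  measurable_fun setT (fun x : borel X => (mdist q x : R)).
Proof.
apply: (measurability _ (RGenInftyO.measurableE R)) => //.
move=> _ [_ [r ->] <-]; rewrite setTI.
apply: sub_sigma_algebra.
rewrite (_ : _ @^-1` _ = [set y | mdist q y < r]); first exact: open_mball.
by apply/seteqP; split => y /=; rewrite in_itv.
Qed.

Lemma mdist_pair_measurable : separable X ->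
  measurable_fun setT (fun z : borel X * borel X => (mdist z.1 z.2 : R)).
Proof.
move=> [D [cD dD]].
apply: (measurability _ (RGenInftyO.measurableE R)) => //.
move=> _ [_ [r ->] <-]; rewrite setTI.
have -> : (fun z : borel X * borel X => (mdist z.1 z.2 : R)) @^-1` `]-oo, r[ =
    \bigcup_(q in D) [set z : borel X * borel X | mdist q z.1 + mdist q z.2 < r].
  apply/seteqP; split => z; case: z => x y /=; rewrite ?in_itv /=.
    move=> hxy; pose e := (r - mdist x y) / 2.
    have e0 : 0 < e by rewrite divr_gt0// subr_gt0.
    have ne : [set q | mdist x q < e] !=set0 by exists x; rewrite /= mdistxx.
    have [q [hq Dq]] := dD _ ne (open_mball x e).
    exists q => //=.
    have h1 := metric_triangle q x y.
    have h2 : mdist q x = mdist x q by exact: metric_sym.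
    move: hq; rewrite /e => hq.
    rewrite /= in hq; lra.
  move=> [q Dq /= h].
  by apply: le_lt_trans h; rewrite (metric_sym q x); exact: metric_triangle.
rewrite bigcup_set_type; apply: countable_bigcupT_measurable.
  by rewrite (eq_countable (card_setT _)).
move=> q; rewrite -[X in measurable X]setTI.
have mf : measurable_fun setT
    (fun z : borel X * borel X => mdist (val q) z.1 + mdist (val q) z.2).
  apply: measurable_funD.
  - exact: measurableT_comp (mdist_measurable _) measurable_fst.
  - exact: measurableT_comp (mdist_measurable _) measurable_snd.
rewrite (_ : [set z | _] = (fun z : borel X * borel X =>
    mdist (val q) z.1 + mdist (val q) z.2) @^-1` `]-oo, r[).
  by apply: mf => //; exact: measurable_itv.
by apply/seteqP; split => z /=; rewrite in_itv.
Qed.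

End metric_meas.
Lemma psi_measurable {R : realType} (X : pmetricType R) (T : X -> X) (s : nat -> R) :
  separable X -> measurable_fun [set: borel X] (T : borel X -> borel X) ->
  measurable_fun setT (fun z : borel X * borel X => prox_gauge T s z.1 z.2).
Proof.
move=> hX hT.
have miter n : measurable_fun setT (iter n (T : borel X -> borel X)).
  elim: n => [|n IH] /=; first exact: measurable_id.
  exact: measurableT_comp hT IH.
have mg n : measurable_fun setT (fun z : borel X * borel X =>
    (- (s n * mdist (iter n T z.1) (iter n T z.2))%:E)%E).
  apply: measurableT_comp => //; apply/measurable_EFinP.
  apply: measurable_funM => //.
  have -> : (fun z : borel X * borel X => mdist (iter n T z.1) (iter n T z.2)) =
    (fun z : borel X * borel X => (mdist z.1 z.2 : R)) \o
    (fun z : borel X * borel X => (iter n T z.1, iter n T z.2)) by [].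
  apply: measurableT_comp; first exact: mdist_pair_measurable.
  apply: measurable_fun_pair.
  - exact: measurableT_comp (miter n) measurable_fst.
  - exact: measurableT_comp (miter n) measurable_snd.
rewrite /prox_gauge /limn_einf; apply: measurableT_comp => //.
exact: measurable_fun_limn_esup mg.
Qed.

Theorem proposition3p8 (R : realType) (X : pmetricType R)
  (hX : separable X)
  (T : X -> X) (hT : measurable_fun [set: borel X] (T : borel X -> borel X))
  (mu : probability (borel X) R)
  (hinv : forall A : set (borel X), measurable A -> mu (T @^-1` A) = mu A)
  (s : nat -> R) (hs : scale_sequence s)
  (hms : monotone_seq s \/ steady_seq s) :
  {ae (mu \x mu)%E, forall z : (borel X * borel X)%type,
     prox_gauge T s (T z.1) (T z.2) = prox_gauge T s z.1 z.2}.
Proof.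
case: hms => [hm|hst]; last first.
  by apply: nearW => z; apply: prox_steady_eq => //; case: hs.
have mS : measurable_fun setT (fun z : borel X * borel X => ((T z.1, T z.2) : borel X * borel X)).
  by apply: measurable_fun_pair; apply: measurableT_comp => //.
apply: (@invariance_ae _ _ _ (mu \x mu)%E (fun z : borel X * borel X => ((T z.1, T z.2) : borel X * borel X))
  (fun z : borel X * borel X => prox_gauge T s z.1 z.2)).
- have := product_measure1E mu mu (@measurableT _ (borel X)) (@measurableT _ (borel X)).
  rewrite setXTT => h1.
  have h2 : mu setT = 1%E by exact: probability_setT.
  have h3 : ((mu \x mu)%E [set: borel X * borel X] = 1)%E.
    by rewrite h1 -[RHS](mule1 1%E); congr (_ * _)%E; exact: probability_setT.
  apply: (@le_lt_trans _ _ 1%E); last exact: ltry.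
  rewrite le_eqVlt; apply/orP; left; apply/eqP; exact: h3.
- exact: mS.
- exact: prod_invariant.
- exact: psi_measurable.
- by move=> z; exact: prox_mono_le.
Qed.
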